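(* For every positive integer $n$ and every $\epsilon\ge 0$ (with the case $\epsilon=4$ understood as the limit $\epsilon\to4$ of the right-hand side), $$\sum_{i=1}^n\left|\Phi^{-1}\left(\frac{i}{n+1}\right)\right|^{2\epsilon}\le 2^{\frac{11}{4}\epsilon+1}(n+1)^{\frac{\epsilon}{4}}\left(1+\frac{\left(\left\lceil\frac{n+1}{2}\right\rceil\right)^{1-\frac{\epsilon}{4}}-1}{1-\frac{\epsilon}{4}}\right).$$
   Context: $\Phi^{-1}$ is the quantile function (inverse CDF) of the standard normal distribution; $\lceil\cdot\rceil$ is the ceiling function. *)

(* Defs.v *)
From Stdlib Require Import Reals Lra ClassicalEpsilon.
From Coquelicot Require Import Coquelicot.
Open Scope R_scope.

Definition std_normal_pdf (t : R) : R := exp (- t ^ 2 / 2) / sqrt (2 * PI).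

Definition Phi (x : R) : R :=
  RInt_gen std_normal_pdf (Rbar_locally m_infty) (at_point x).

Definition Phi_inv (p : R) : R :=
  epsilon (inhabits 0) (fun x => Phi x = p).

Definition rpow (x y : R) : R :=
  if Req_EM_T x 0 then (if Req_EM_T y 0 then 1 else 0) else Rpower x y.

(* (c^{1-e/4} - 1)/(1-e/4), with value at e = 4 the limit ln c *)
Definition bracket_term (c e : R) : R :=
  if Req_EM_T e 4 then ln c
  else (rpow c (1 - e / 4) - 1) / (1 - e / 4).

Definition ceil_half_succ (n : nat) : nat := Nat.div (n + 2) 2.

(* Main.v *)
Require Import Defs.
From Stdlib Require Import Reals Lra Lia ClassicalEpsilon.
From Coquelicot Require Import Coquelicot.
Open Scope R_scope.

Lemma RInt_deriv_pt (f : R -> R) a x : (forall y, continuity_pt f y) ->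
  derivable_pt_lim (fun y => RInt f a y) x (f x).
Proof.
intros Hc.
assert (H : forall b, is_RInt f a b (RInt f a b)).
{ intros b. assert (E : ex_RInt f a b).
  { apply (ex_RInt_continuous (V:=R_CompleteNormedModule)). intros z _. apply continuity_pt_filterlim, Hc. }
  exact (RInt_correct f a b E). }
apply is_derive_Reals.
apply (is_derive_RInt f (fun y => RInt f a y) a x).
- exists (mkposreal 1 Rlt_0_1). intros; apply H.
- apply continuity_pt_filterlim, Hc.
Qed.
Lemma gfc : forall y, continuity_pt (fun t => exp (- (t * t))) y.
Proof.
intros y.
apply (continuity_pt_comp (fun t => - (t * t)) exp).
- apply continuity_pt_opp, continuity_pt_mult; apply derivable_continuous_pt, derivable_pt_id.
- apply derivable_continuous_pt, derivable_pt_exp.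
Qed.

Module Bridge.
From HB Require Import structures.
From mathcomp Require Import all_boot all_order all_algebra.
From mathcomp Require Import all_classical all_reals all_analysis.
From mathcomp Require Import Rstruct Rstruct_topology ring lra.
Import Order.TTheory GRing.Theory Num.Theory.
Import numFieldNormedType.Exports.
Local Open Scope classical_set_scope.
Local Open Scope ring_scope.
Lemma RcosE (x : R) : Rtrigo_def.cos x = cos x.
Proof.
have H1 : series (cos_coeff' x) @ \oo --> Rtrigo_def.cos x.
  rewrite /Rtrigo_def.cos; case: exist_cos => y.
  rewrite /cos_in /infinite_sum => H.
  rewrite -cvg_shiftS; apply/cvgrPdist_lt => /= e /RltP /H[N HN].
  near=> n.
  have nN : (n >= N)%coq_nat by apply/ssrnat.leP; near: n; exact: nbhs_infty_ge.
  move: (HN _ nN) => /[!RdistE] /RltP /=.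
  rewrite distrC sum_f_R0E; congr (`| _ - _ | < e).
  apply: eq_bigr => k _.
  rewrite /cos_n /cos_coeff' RdivE ?RpowE ?INRE ?factE.
  rewrite -exprnP /Rsqr; have -> : (x * x)%coqR = x ^+ 2 by rewrite expr2. rewrite -exprM.
  change ((2 * k)%coq_nat) with (2 * k)%N; rewrite mul2n.
  by rewrite mulrAC.
have H2 := @cvg_cos_coeff' R x. have := cvg_unique _ H1 H2. move=> ->. done.
Unshelve. all: by end_near. Qed.

Lemma piE_R : pi = PI.
Proof.
have h1 := @pihalf_02_cos_pihalf R.
have h2 : Rtrigo_def.cos (PI/2) = 0 by exact: cos_PI2.
rewrite RcosE in h2.

have : pi / 2 = PI / 2.
  apply: cos_inj.
  - rewrite in_itv /=; apply/andP; split; first by case: h1 => /andP[].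
    rewrite ler_pdivrMr // ler_peMr //; first exact: pi_ge0. by rewrite (ler_nat _ 1 2).
  - rewrite in_itv /=; apply/andP; split.
      apply: divr_ge0; last by rewrite ler0n.
      by apply/RleP; exact: (Rlt_le _ _ PI_RGT_0).
    apply: (le_trans (y := 2)).
      rewrite ler_pdivrMr //. have := PI_4; move/RleP; rewrite IZRposE INRE /= => ?. lra.
    exact: pi_ge2.
  by rewrite h2; case: h1.
move=> /(congr1 (fun z => z * 2)); rewrite !divfK //.
Qed.

Lemma deriv_bridge (f : R^o -> R^o) x l : derivable_pt_lim f x l ->
  derivable f x 1 /\ (f^`())%classic x = l.
Proof.
move=> Hf.
have H : (fun h : R^o => h^-1 *: (f (h + x) - f x)) @ 0^' --> l.
  apply/cvgrPdist_lt => e /RltP e0.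
  have [d Hd] := Hf e e0.
  rewrite /dnbhs /within /=. 
  apply/nbhs_ballP. exists (pos d); first by apply/RltP; exact: cond_pos d.
  move=> t /= bt /eqP tne0.
  have bt' : (Rabs t < d)%coqR.
    by apply/RltP; move: bt; rewrite /ball /= sub0r normrN RabsE.
  have := Hd t tne0 bt'.
  move/RltP; rewrite RabsE distrC RdivE RminusE RplusE [x + t]addrC.
  by rewrite mulrC.
split.
  apply/cvg_ex; exists l.
  apply: cvg_trans H; apply: near_eq_cvg; near=> h.
  by rewrite /= [h *: 1]mulr1.
by rewrite /derive1; apply: cvg_lim.
Unshelve. all: by end_near. Qed.

Lemma RInt_bridge (f : R -> R) a b : a < b -> (forall x, continuity_pt f x) ->
  (\int[lebesgue_measure]_(x in `[a, b]) (f x)%:E)%E = (RInt f a b)%:E.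
Proof.
move=> ab fc.
pose F : R^o -> R^o := fun y => RInt f a y.
have dF y : derivable F y 1 /\ (F^`())%classic y = f y.
  apply: (@deriv_bridge F y (f y)); exact: (RInt_deriv_pt f a y fc).
have cF : continuous F.
  move=> y; apply: differentiable_continuous; apply/derivable1_diffP; exact: (dF y).1.
rewrite (@continuous_FTC2 _ f F a b ab).
- rewrite -EFinB; congr (_%:E); rewrite /F RInt_point subr0 //.
- by apply: continuous_subspaceT => x; exact/continuity_ptE.
- split.
  + by move=> y _; exact: (dF y).1.
  + by apply: cvg_at_right_filter; exact: cF.
  + by apply: cvg_at_left_filter; exact: cF.
- by move=> y _; exact: (dF y).2.
Qed.

Lemma gauss_bridge x : 0 < x ->
  gauss_integral_proof.integral0_gauss x = RInt (fun t => exp (- (t * t))) 0 x.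
Proof.
move=> x0.
rewrite /gauss_integral_proof.integral0_gauss /Rintegral /=.
have H := @RInt_bridge _ 0 x x0 gfc.
transitivity (fine ((RInt (fun t => exp (-(t*t))) 0 x)%:E)); last by [].
rewrite -H.
congr fine; apply: eq_integral => t _.
by rewrite /gauss_fun RexpE expr2.
Qed.

Lemma gauss_sq_lim_mc (e : R) : (0 < e)%coqR -> exists M : R, forall x : R, (M < x)%coqR ->
  (Rabs ((RInt (fun t => exp (- (t * t))) 0 x) ^ 2 - PI / 4) < e)%coqR.
Proof.
move=> /RltP e0.
have := @gauss_integral_proof.cvg_integral0_gauss_sqr R.
move/cvgrPdist_lt => /(_ e e0) [M [_ HM]].
exists (Rmax M 0) => x Mx.
have xM : M < x by apply/RltP; apply: (Rle_lt_trans _ _ _ (Rmax_l M 0) Mx).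
have x0 : 0 < x by apply/RltP; apply: (Rle_lt_trans _ _ _ (Rmax_r M 0) Mx).
have := HM x xM.
rewrite gauss_bridge // piE_R => H.
apply/RltP. rewrite RabsE RminusE RpowE RdivE distrC IZRposE INRE /=.
exact H.
Qed.
End Bridge.

From Stdlib Require Import Lra Lia.
Open Scope R_scope.

Lemma gauss_sq_lim : forall e, 0 < e -> exists M, forall x, M < x ->
  Rabs ((RInt (fun t => exp (- (t * t))) 0 x) ^ 2 - PI / 4) < e.
Proof. exact Bridge.gauss_sq_lim_mc. Qed.

Lemma exp_le x y : x <= y -> exp x <= exp y.
Proof. intros H; destruct (Rle_lt_or_eq_dec _ _ H) as [H1|H1].
- left; apply exp_increasing; auto.
- subst; lra. Qed.

Definition pdf := std_normal_pdf.
Definition G (x : R) := RInt pdf 0 x.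

Lemma sqrt2PI_pos : 0 < sqrt (2 * PI).
Proof. apply sqrt_lt_R0. pose proof PI_RGT_0. lra. Qed.

Lemma pdf_pos t : 0 < pdf t.
Proof. unfold pdf, std_normal_pdf. apply Rdiv_lt_0_compat. apply exp_pos. apply sqrt2PI_pos. Qed.

Lemma pdf_cont y : continuity_pt pdf y.
Proof.
unfold pdf, std_normal_pdf.
apply continuity_pt_div.
- apply (continuity_pt_comp (fun t => - t ^ 2 / 2) exp).
  + apply continuity_pt_div. apply continuity_pt_opp. apply derivable_continuous_pt. apply derivable_pt_pow.
    apply continuity_pt_const. intros a b; reflexivity. lra.
  + apply derivable_continuous_pt, derivable_pt_exp.
- apply continuity_pt_const. intros a b; reflexivity.
- pose proof sqrt2PI_pos; lra.
Qed.

Lemma ex_RInt_pdf a b : ex_RInt pdf a b.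
Proof. apply (ex_RInt_continuous (V:=R_CompleteNormedModule)). intros z _. apply continuity_pt_filterlim, pdf_cont. Qed.

Lemma G_deriv x : derivable_pt_lim G x (pdf x).
Proof. apply RInt_deriv_pt. apply pdf_cont. Qed.

Lemma G_cont : continuity G.
Proof. intros x. apply derivable_continuous_pt. exists (pdf x). apply G_deriv. Qed.

Lemma G_chasles a b : RInt pdf a b = G b - G a.
Proof.
unfold G. pose proof (RInt_Chasles (V:=R_CompleteNormedModule) pdf 0 a b (ex_RInt_pdf _ _) (ex_RInt_pdf _ _)) as H.
simpl in H. unfold plus in H; simpl in H. lra.
Qed.

Lemma RInt_pdf_ge0 a b : a <= b -> 0 <= RInt pdf a b.
Proof. intros H. apply RInt_ge_0; auto. apply ex_RInt_pdf. intros; left; apply pdf_pos. Qed.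

Lemma G_mono a b : a <= b -> G a <= G b.
Proof. intros H. pose proof (RInt_pdf_ge0 a b H). rewrite G_chasles in H0. lra. Qed.

Lemma G0 : G 0 = 0.
Proof. unfold G. rewrite RInt_point. reflexivity. Qed.

Lemma pdf_even t : pdf (- t) = pdf t.
Proof. unfold pdf, std_normal_pdf. f_equal. f_equal. f_equal. ring. Qed.

Lemma G_odd x : G (- x) = - G x.
Proof.
unfold G.
pose proof (RInt_comp_lin (V:=R_CompleteNormedModule) pdf (-1) 0 0 x) as H.
replace (-1 * 0 + 0) with 0 in H by ring.
replace (-1 * x + 0) with (-x) in H by ring.
rewrite <- H by apply ex_RInt_pdf.
transitivity (RInt (fun y => opp (pdf y)) 0 x).
- apply RInt_ext. intros y _. unfold scal; simpl. unfold mult, opp; simpl. replace (-1 * y + 0) with (- y) by ring.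
  rewrite pdf_even. ring.
- rewrite (RInt_opp (V:=R_CompleteNormedModule)) by apply ex_RInt_pdf. reflexivity.
Qed.

Definition gf (t : R) := exp (- (t * t)).

Lemma ex_RInt_gf a b : ex_RInt gf a b.
Proof.
apply (ex_RInt_continuous (V:=R_CompleteNormedModule)). intros z _. apply continuity_pt_filterlim.
unfold gf. apply (continuity_pt_comp (fun t => - (t * t)) exp).
- apply continuity_pt_opp, continuity_pt_mult; apply derivable_continuous_pt, derivable_pt_id.
- apply derivable_continuous_pt, derivable_pt_exp.
Qed.

Lemma G_gf x : G x = RInt gf 0 (x / sqrt 2) / sqrt PI.
Proof.
assert (s2 : 0 < sqrt 2) by (apply sqrt_lt_R0; lra).
assert (sP : 0 < sqrt PI) by (apply sqrt_lt_R0; apply PI_RGT_0).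
assert (E2 : sqrt 2 * sqrt 2 = 2) by (apply sqrt_sqrt; lra).
pose proof (RInt_comp_lin (V:=R_CompleteNormedModule) gf (/ sqrt 2) 0 0 x (ex_RInt_gf _ _)) as H.
replace (/ sqrt 2 * 0 + 0) with 0 in H by ring.
replace (/ sqrt 2 * x + 0) with (x / sqrt 2) in H by (unfold Rdiv; ring).
rewrite <- H.
unfold G.
transitivity (RInt (fun y => scal (/ sqrt PI) (scal (/ sqrt 2) (gf (/ sqrt 2 * y + 0)))) 0 x).
- apply RInt_ext. intros y _. unfold scal; simpl; unfold mult; simpl.
  unfold pdf, std_normal_pdf, gf. rewrite sqrt_mult by (try lra; left; apply PI_RGT_0).
  replace (- ((/ sqrt 2 * y + 0) * (/ sqrt 2 * y + 0))) with (- y ^ 2 / 2).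
  + field. lra.
  + replace (- ((/ sqrt 2 * y + 0) * (/ sqrt 2 * y + 0))) with (- y ^ 2 / (sqrt 2 * sqrt 2)).
    rewrite E2. reflexivity. field. lra.
- rewrite (RInt_scal (V:=R_CompleteNormedModule)).
  + unfold scal; simpl; unfold mult; simpl. unfold Rdiv. ring.
  + apply (ex_RInt_comp_lin (V:=R_CompleteNormedModule)). 
    apply ex_RInt_gf.
Qed.



Lemma G_nonneg x : 0 <= x -> 0 <= G x.
Proof. intros H. rewrite <- G0. apply G_mono; auto. Qed.

Lemma G_lim e : 0 < e -> exists M, forall x, M < x -> Rabs (G x - 1/2) < e.
Proof.
intros He.
assert (P0 : 0 < PI) by apply PI_RGT_0.
assert (s2 : 0 < sqrt 2) by (apply sqrt_lt_R0; lra).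
assert (sP : 0 < sqrt PI) by (apply sqrt_lt_R0; lra).
assert (EP : sqrt PI * sqrt PI = PI) by (apply sqrt_sqrt; lra).
destruct (gauss_sq_lim (e * PI / 2)) as [M HM].
{ apply Rmult_lt_0_compat; [apply Rmult_lt_0_compat|]; lra. }
exists (Rmax (sqrt 2 * M) 0). intros x Hx.
assert (x0 : 0 < x) by (pose proof (Rmax_r (sqrt 2 * M) 0); lra).
assert (xM : M < x / sqrt 2).
{ pose proof (Rmax_l (sqrt 2 * M) 0).
  apply (Rmult_lt_reg_l (sqrt 2)); auto. field_simplify; lra. }
specialize (HM _ xM). fold gf in HM.
pose proof (G_nonneg x (Rlt_le _ _ x0)) as Gn.
rewrite G_gf in *.
generalize dependent (RInt gf 0 (x / sqrt 2)). intros H HM Gn. change R in H.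
set (g := H / sqrt PI) in *.
assert (Hg : H = g * sqrt PI) by (unfold g; field; lra).
rewrite Hg in HM.
assert (EQ : (g * sqrt PI) ^ 2 - PI / 4 = PI * (g * g - 1/4)).
{ transitivity (g*g*(sqrt PI*sqrt PI) - PI/4). ring. rewrite EP. field. }
rewrite EQ in HM.
rewrite Rabs_mult, (Rabs_right PI) in HM by lra.
assert (K : Rabs (g * g - 1/4) < e / 2).
{ apply (Rmult_lt_reg_l PI); auto. lra. }
replace (g * g - 1/4) with ((g - 1/2) * (g + 1/2)) in K by field.
rewrite Rabs_mult, (Rabs_right (g + 1/2)) in K by lra.
assert (Rabs (g - 1/2) * (1/2) <= Rabs (g - 1/2) * (g + 1/2)).
{ apply Rmult_le_compat_l. apply Rabs_pos. lra. }
lra.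
Qed.

Lemma Phi_eq x : Phi x = 1/2 + G x.
Proof.
unfold Phi. fold pdf.
apply (is_RInt_gen_unique (V:=R_CompleteNormedModule)).
unfold is_RInt_gen, filterlimi, filter_le, filtermapi.
intros P [eps HP].
destruct (G_lim eps (cond_pos eps)) as [M HM].
apply (Filter_prod _ _ _ (fun a => a < -M) (fun b => b = x)).
- exists (-M). auto.
- reflexivity.
- intros a b Ha Hb. simpl in Hb. subst b.
  exists (RInt pdf a x). split.
  + exact (RInt_correct pdf a x (ex_RInt_pdf a x)).
  + apply HP. unfold ball; simpl. unfold AbsRing_ball, abs, minus, plus, opp; simpl.
    rewrite G_chasles. replace (G x - G a + - (1 / 2 + G x)) with (- G a - 1/2) by field.
    rewrite <- G_odd. apply HM. lra.
Qed.

Lemma sqrt2PI_ge2 : 2 <= sqrt (2 * PI).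
Proof.
pose proof PI2_1. pose proof (sqrt_sqrt (2 * PI)) as E.
pose proof (sqrt_pos (2 * PI)).
assert (0 <= 2 * PI) by lra. specialize (E H1).
nra.
Qed.

Lemma tail_int a b : 1 <= a <= b -> RInt pdf a b <= exp (- a ^ 2 / 2) / 2.
Proof.
intros [Ha Hab].
set (h := fun t => t * exp (- t ^ 2 / 2) / 2).
set (F := fun t => - exp (- t ^ 2 / 2) / 2).
assert (HI : is_RInt h a b (minus (F b) (F a))).
{ apply (is_RInt_derive (V:=R_CompleteNormedModule)).
  - intros t _. unfold F, h. auto_derive. auto. replace (- (t * (t * 1)) * / 2) with (- t ^ 2 / 2) by field. field.
  - intros t _. unfold h. apply continuity_pt_filterlim.
    apply continuity_pt_div; [| apply continuity_pt_const; intros u v; reflexivity | lra].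
    apply continuity_pt_mult. apply derivable_continuous_pt, derivable_pt_id.
    apply (continuity_pt_comp (fun t => - t ^ 2 / 2) exp).
    + apply continuity_pt_div. apply continuity_pt_opp. apply derivable_continuous_pt. apply derivable_pt_pow.
      apply continuity_pt_const. intros u v; reflexivity. lra.
    + apply derivable_continuous_pt, derivable_pt_exp. }
apply Rle_trans with (RInt h a b).
- apply RInt_le; auto. apply ex_RInt_pdf. exists (minus (F b) (F a)). exact HI.
  intros t Ht. unfold pdf, std_normal_pdf, h.
  pose proof sqrt2PI_ge2. pose proof (exp_pos (- t ^ 2 / 2)).
  unfold Rdiv. apply Rle_trans with (exp (- t ^ 2 / 2) * / 2).
  + apply Rmult_le_compat_l. lra. apply Rinv_le_contravar; lra.
  + nra.
- rewrite (is_RInt_unique _ _ _ _ HI). unfold minus, plus, opp, F; cbn -[pow].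
  pose proof (exp_pos (- b ^ 2 / 2)). lra.
Qed.

Lemma tail x : 1 <= x -> 1/2 - G x <= exp (- x ^ 2 / 2) / 2.
Proof.
intros Hx.
destruct (Rle_or_lt (1/2 - G x) (exp (- x ^ 2 / 2) / 2)) as [H|H]; auto.
exfalso.
destruct (G_lim (1/2 - G x - exp (- x ^ 2 / 2) / 2)) as [M HM]; [lra|].
set (y := Rmax (M + 1) x).
assert (y1 : M < y) by (unfold y; pose proof (Rmax_l (M+1) x); lra).
assert (y2 : x <= y) by (unfold y; apply Rmax_r).
specialize (HM y y1).
pose proof (tail_int x y (conj Hx y2)) as T.
rewrite G_chasles in T.
apply Rabs_def2 in HM. lra.
Qed.

Lemma Phi_inv_spec p : 0 < p < 1 -> 1/2 + G (Phi_inv p) = p.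
Proof.
intros Hp. rewrite <- Phi_eq. unfold Phi_inv.
apply epsilon_spec.
set (e := Rmin p (1 - p)).
assert (e0 : 0 < e) by (unfold e; apply Rmin_glb_lt; lra).
assert (e1 : e <= p) by apply Rmin_l.
assert (e2 : e <= 1 - p) by apply Rmin_r.
destruct (G_lim e e0) as [M HM].
set (x2 := Rabs M + 1).
assert (x2M : M < x2) by (unfold x2; pose proof (Rle_abs M); lra).
assert (x2p : 0 < x2) by (unfold x2; pose proof (Rabs_pos M); lra).
specialize (HM x2 x2M). apply Rabs_def2 in HM.
assert (Hodd := G_odd x2).
destruct (IVT (fun x => G x - (p - 1/2)) (- x2) x2) as [z [Hz1 Hz2]].
- intros y. apply continuity_pt_minus. apply G_cont. apply continuity_pt_const. intros u v; reflexivity.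
- lra.
- simpl. lra.
- simpl. lra.
- exists z. rewrite Phi_eq. simpl in Hz2. lra.
Qed.

Lemma exp_bound y : y ^ 8 * exp (- y ^ 2 / 2) <= 4096.
Proof.
set (v := exp (y ^ 2 / 8)).
set (w := exp (- y ^ 2 / 2)).
assert (Hw : w * v ^ 4 = 1).
{ unfold w, v. replace ((exp (y^2/8))^4) with (exp (y^2/8) * exp (y^2/8) * exp (y^2/8) * exp (y^2/8)) by ring.
  rewrite <- !exp_plus. rewrite <- exp_0. f_equal. field. }
assert (w0 : 0 < w) by apply exp_pos.
assert (Hv : 1 + y ^ 2 / 8 <= v) by apply exp_ineq1_le.
assert (y2 : 0 <= y ^ 2) by (apply pow2_ge_0).
assert (P : (y ^ 2) ^ 4 <= (8 * v) ^ 4) by (apply pow_incr; lra).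
replace (y ^ 8) with ((y ^ 2) ^ 4) by ring.
replace ((8 * v) ^ 4) with (4096 * v ^ 4) in P by ring.
apply Rle_trans with (4096 * v ^ 4 * w).
- apply Rmult_le_compat_r; lra.
- replace (4096 * v ^ 4 * w) with (4096 * (w * v ^ 4)) by ring. rewrite Hw. lra.
Qed.

Lemma key p : 0 < p < 1 -> Rmin p (1 - p) * (Phi_inv p) ^ 8 <= 2048.
Proof.
intros Hp.
pose proof (Phi_inv_spec p Hp) as E.
set (x := Phi_inv p) in *.
set (m := Rmin p (1 - p)).
assert (m1 : m <= p) by apply Rmin_l.
assert (m2 : m <= 1 - p) by apply Rmin_r.
assert (m0 : 0 < m) by (unfold m; apply Rmin_glb_lt; lra).
assert (x8 : 0 <= x ^ 8) by (replace (x ^ 8) with ((x ^ 4) ^ 2) by ring; apply pow2_ge_0).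
destruct (Rle_or_lt 1 x) as [H1|H1].
- pose proof (tail x H1). pose proof (exp_bound x).
  apply Rle_trans with (exp (- x ^ 2 / 2) / 2 * x ^ 8).
  + apply Rmult_le_compat_r; lra.
  + lra.
- destruct (Rle_or_lt x (-1)) as [H2|H2].
  + assert (H3 : 1 <= - x) by lra. pose proof (tail (- x) H3). rewrite G_odd in H.
    pose proof (exp_bound x).
    replace ((- x) ^ 2) with (x ^ 2) in H by ring.
    apply Rle_trans with (exp (- x ^ 2 / 2) / 2 * x ^ 8).
    * apply Rmult_le_compat_r; lra.
    * lra.
  + assert (x2 : x ^ 2 <= 1) by nra.
    assert (x8' : x ^ 8 <= 1).
    { replace (x ^ 8) with ((x ^ 2) ^ 4) by ring. replace 1 with (1 ^ 4) by ring.
      apply pow_incr. split; [apply pow2_ge_0 | lra]. }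
    nra.
Qed.

Lemma L2 x m eps : 0 < m -> 0 <= eps -> m * x ^ 8 <= 2048 ->
  rpow (Rabs x) (2 * eps) <= exp (eps * (11/4 * ln 2 - 1/4 * ln m)).
Proof.
intros m0 e0 H.
unfold rpow. destruct (Req_EM_T (Rabs x) 0) as [E|E].
- destruct (Req_EM_T (2 * eps) 0) as [E2|E2].
  + replace eps with 0 by lra. rewrite Rmult_0_l, exp_0. lra.
  + left; apply exp_pos.
- unfold Rpower. apply exp_le.
  assert (ax : 0 < Rabs x) by (pose proof (Rabs_pos x); lra).
  assert (x8 : Rabs x ^ 8 = x ^ 8).
  { replace (Rabs x ^ 8) with ((Rabs x ^ 2) ^ 4) by ring. rewrite pow2_abs. ring. }
  assert (K : ln (m * Rabs x ^ 8) <= ln (2 ^ 11)).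
  { apply ln_le. apply Rmult_lt_0_compat; auto. apply pow_lt; auto.
    rewrite x8. lra. }
  rewrite ln_mult, !ln_pow in K by (try lra; try apply pow_lt; auto).
  simpl INR in K.
  assert (K2 : 2 * ln (Rabs x) <= 11/4 * ln 2 - 1/4 * ln m) by lra.
  apply Rmult_le_compat_l with (r := eps) in K2; auto.
  lra.
Qed.

Definition hh (eps : R) (j : nat) := exp (- (eps / 4) * ln (INR j)).
Definition FF (eps : R) (j : nat) := 1 + bracket_term (INR j) eps.

Lemma hh_pos eps j : 0 < hh eps j.
Proof. apply exp_pos. Qed.

Lemma hh1 eps : hh eps 1 = 1.
Proof. unfold hh. simpl. rewrite ln_1, Rmult_0_r. apply exp_0. Qed.

Lemma FF1 eps : FF eps 1 = 1.
Proof.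
unfold FF, bracket_term. simpl INR.
destruct (Req_EM_T eps 4).
- rewrite ln_1. ring.
- unfold rpow. destruct (Req_EM_T 1 0). lra.
  unfold Rpower. rewrite ln_1, Rmult_0_r, exp_0. unfold Rdiv. ring.
Qed.

Lemma step eps j : 0 <= eps -> (1 <= j)%nat -> FF eps j + hh eps (S j) <= FF eps (S j).
Proof.
intros e0 j1.
assert (J : 1 <= INR j) by (apply (le_INR 1); auto).
unfold FF, bracket_term, hh. rewrite !S_INR.
destruct (Req_EM_T eps 4) as [E|E].
- subst eps.
  destruct (MVT_cor2 ln (fun x => / x) (INR j) (INR j + 1)) as [c [Hc1 Hc2]].
  + lra.
  + intros c Hc. apply derivable_pt_lim_ln. lra.
  + replace (- (4/4) * ln (INR j + 1)) with (- ln (INR j + 1)) by field.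
    rewrite exp_Ropp, exp_ln by lra.
    assert (/ (INR j + 1) <= / c) by (apply Rinv_le_contravar; lra).
    lra.
- set (b := 1 - eps / 4).
  assert (b0 : b <> 0) by (unfold b; intro; apply E; lra).
  unfold rpow.
  destruct (Req_EM_T (INR j) 0) as [E1|_]; [lra|].
  destruct (Req_EM_T (INR j + 1) 0) as [E1|_]; [lra|].
  destruct (MVT_cor2 (fun x => Rpower x b) (fun x => b * Rpower x (b - 1)) (INR j) (INR j + 1)) as [c [Hc1 Hc2]].
  + lra.
  + intros c Hc. apply derivable_pt_lim_power. lra.
  + assert (D : (Rpower (INR j + 1) b - 1) / b - (Rpower (INR j) b - 1) / b = Rpower c (b - 1)).
    { replace ((Rpower (INR j + 1) b - 1) / b - (Rpower (INR j) b - 1) / b)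
        with ((Rpower (INR j + 1) b - Rpower (INR j) b) / b) by (field; auto).
      rewrite Hc1. field. auto. }
    assert (M : exp (- (eps / 4) * ln (INR j + 1)) <= Rpower c (b - 1)).
    { unfold Rpower. apply exp_le. replace (b - 1) with (- (eps / 4)) by (unfold b; ring).
      assert (ln c <= ln (INR j + 1)) by (apply ln_le; lra).
      assert (0 <= eps / 4) by lra. nra. }
    lra.
Qed.

Definition hc (eps : R) (c j : nat) := if Nat.leb j c then hh eps j else 0.

Lemma hc_nonneg eps c j : 0 <= hc eps c j.
Proof. unfold hc. destruct (Nat.leb j c). left; apply hh_pos. lra. Qed.

Lemma FF_mono eps d j : 0 <= eps -> (1 <= j)%nat -> FF eps j <= FF eps (j + d).
Proof.
intros e0 j1. induction d.
- rewrite Nat.add_0_r. lra.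
- replace (j + S d)%nat with (S (j + d)) by lia.
  pose proof (step eps (j + d) e0 ltac:(lia)). pose proof (hh_pos eps (S (j + d))). lra.
Qed.

Lemma sum_bound eps c : 0 <= eps -> (1 <= c)%nat -> forall N,
  sum_f_R0 (fun k => hc eps c (S k)) N <= FF eps (Nat.min (S N) c).
Proof.
intros e0 c1. induction N.
- replace (Nat.min 1 c) with 1%nat by lia. simpl. unfold hc. replace (Nat.leb 1 c) with true by (symmetry; apply Nat.leb_le; lia).
  rewrite hh1, FF1. lra.
- simpl sum_f_R0. unfold hc at 2. destruct (Nat.leb (S (S N)) c) eqn:Hl.
  + apply Nat.leb_le in Hl.
    replace (Nat.min (S N) c) with (S N) in IHN by lia.
    replace (Nat.min (S (S N)) c) with (S (S N)) by lia.
    pose proof (step eps (S N) e0 ltac:(lia)). lra.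
  + apply Nat.leb_gt in Hl.
    replace (Nat.min (S N) c) with c in IHN by lia.
    replace (Nat.min (S (S N)) c) with c by lia. lra.
Qed.

Lemma sum_rev f N : sum_f_R0 (fun k => f (N - k)%nat) N = sum_f_R0 f N.
Proof.
induction N.
- reflexivity.
- rewrite decomp_sum by lia. simpl pred.
  replace (sum_f_R0 (fun i => f (S N - S i)%nat) N) with (sum_f_R0 (fun k => f (N - k)%nat) N).
  + rewrite IHN. replace (S N - 0)%nat with (S N) by lia. simpl. ring.
  + apply sum_eq. intros i _. f_equal.
Qed.

Lemma c_facts n : (n + 1 <= 2 * ceil_half_succ n <= n + 2)%nat.
Proof.
unfold ceil_half_succ.
pose proof (Nat.div_mod (n + 2) 2 ltac:(lia)).
pose proof (Nat.mod_upper_bound (n + 2) 2 ltac:(lia)). lia.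
Qed.

Definition AA eps n := exp (eps * (11/4 * ln 2) + eps / 4 * ln (INR (n + 1))).

Lemma exp_split eps j N1 : 0 < INR j -> 0 < N1 ->
  exp (eps * (11/4 * ln 2 - 1/4 * ln (INR j / N1))) =
  exp (eps * (11/4 * ln 2) + eps / 4 * ln N1) * exp (- (eps / 4) * ln (INR j)).
Proof.
intros Hj HN. rewrite <- exp_plus. f_equal. rewrite ln_div by auto. field.
Qed.

Lemma term_bound n k eps : (1 <= n)%nat -> (k <= n - 1)%nat -> 0 <= eps ->
  rpow (Rabs (Phi_inv (INR (k + 1) / INR (n + 1)))) (2 * eps)
  <= AA eps n * (hc eps (ceil_half_succ n) (S k) + hc eps (ceil_half_succ n) (n - k)).
Proof.
intros n1 kn e0.
pose proof (c_facts n) as Cf.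
set (c := ceil_half_succ n) in *.
set (p := INR (k + 1) / INR (n + 1)).
assert (N1 : 0 < INR (n + 1)) by (apply lt_0_INR; lia).
assert (K1 : 0 < INR (k + 1)) by (apply lt_0_INR; lia).
assert (KN : INR (k + 1) < INR (n + 1)) by (apply lt_INR; lia).
assert (Hp : 0 < p < 1).
{ unfold p. split. apply Rdiv_lt_0_compat; auto.
  apply (Rmult_lt_reg_r (INR (n + 1))); auto. field_simplify; lra. }
pose proof (key p Hp) as Kp.
assert (m0 : 0 < Rmin p (1 - p)) by (apply Rmin_glb_lt; lra).
pose proof (L2 _ _ eps m0 e0 Kp) as T.
fold p. eapply Rle_trans; [exact T|].
assert (A0 : 0 < AA eps n) by apply exp_pos.
pose proof (hc_nonneg eps c (S k)). pose proof (hc_nonneg eps c (n - k)).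
destruct (Nat.le_gt_cases (k + 1) (n - k)) as [Hc|Hc].
- assert (E : Rmin p (1 - p) = p).
  { apply Rmin_left. unfold p.
    assert (2 * INR (k + 1) <= INR (n + 1)).
    { replace 2 with (INR 2) by reflexivity. rewrite <- mult_INR. apply le_INR. lia. }
    apply (Rmult_le_reg_r (INR (n + 1))); auto. field_simplify; lra. }
  rewrite E. unfold p. rewrite exp_split by auto. fold (AA eps n).
  unfold hc at 1. replace (Nat.leb (S k) c) with true by (symmetry; apply Nat.leb_le; lia).
  replace (k + 1)%nat with (S k) by lia. unfold hh.
  apply Rmult_le_compat_l; lra.
- assert (E : Rmin p (1 - p) = INR (n - k) / INR (n + 1)).
  { rewrite Rmin_right.
    - unfold p. rewrite minus_INR by lia. rewrite !plus_INR. simpl. field.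
      rewrite plus_INR in N1. simpl in N1. lra.
    - unfold p.
      assert (INR (n + 1) <= 2 * INR (k + 1)).
      { replace 2 with (INR 2) by reflexivity. rewrite <- mult_INR. apply le_INR. lia. }
      apply (Rmult_le_reg_r (INR (n + 1))); auto. field_simplify; lra. }
  rewrite E. rewrite exp_split by (auto; apply lt_0_INR; lia). fold (AA eps n).
  unfold hc at 2. replace (Nat.leb (n - k) c) with true by (symmetry; apply Nat.leb_le; lia).
  unfold hh.
  apply Rmult_le_compat_l; lra.
Qed.

Lemma sum_lin A f g N : sum_f_R0 (fun k => A * (f k + g k)) N = A * (sum_f_R0 f N + sum_f_R0 g N).
Proof. induction N; simpl; [ring | rewrite IHN; ring]. Qed.

Theorem lemma7 (n : nat) (eps : R) :
  (1 <= n)%nat -> 0 <= eps ->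
  sum_f_R0 (fun k => rpow (Rabs (Phi_inv (INR (k + 1) / INR (n + 1)))) (2 * eps)) (n - 1)
  <= rpow 2 (11 / 4 * eps + 1) * rpow (INR (n + 1)) (eps / 4)
     * (1 + bracket_term (INR (ceil_half_succ n)) eps).
Proof.
intros n1 e0.
pose proof (c_facts n) as Cf.
set (c := ceil_half_succ n) in *.
assert (c1 : (1 <= c)%nat) by lia.
fold (FF eps c).
eapply Rle_trans.
{ apply sum_Rle. intros k Hk. apply (term_bound n k eps n1 Hk e0). }
rewrite sum_lin.
assert (RV : sum_f_R0 (fun k => hc eps c (n - k)) (n - 1) = sum_f_R0 (fun k => hc eps c (S k)) (n - 1)).
{ rewrite <- (sum_rev (fun i => hc eps c (S i)) (n - 1)).
  apply sum_eq. intros i Hi. f_equal. lia. }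
fold c. rewrite RV.
pose proof (sum_bound eps c e0 c1 (n - 1)) as SB.
pose proof (FF_mono eps (c - Nat.min (S (n - 1)) c) (Nat.min (S (n - 1)) c) e0 ltac:(lia)) as FM.
replace (Nat.min (S (n - 1)) c + (c - Nat.min (S (n - 1)) c))%nat with c in FM by lia.
pose proof (FF_mono eps (c - 1) 1 e0 ltac:(lia)) as F1.
rewrite FF1 in F1. replace (1 + (c - 1))%nat with c in F1 by lia.
assert (A0 : 0 < AA eps n) by apply exp_pos.
assert (R : rpow 2 (11 / 4 * eps + 1) * rpow (INR (n + 1)) (eps / 4) = 2 * AA eps n).
{ unfold rpow. destruct (Req_EM_T 2 0) as [E|_]; [lra|].
  destruct (Req_EM_T (INR (n + 1)) 0) as [E|_].
  { pose proof (lt_0_INR (n + 1) ltac:(lia)). lra. }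
  unfold Rpower, AA. rewrite <- exp_plus.
  replace ((11 / 4 * eps + 1) * ln 2 + eps / 4 * ln (INR (n + 1)))
    with ((eps * (11 / 4 * ln 2) + eps / 4 * ln (INR (n + 1))) + ln 2) by field.
  rewrite exp_plus, exp_ln by lra. ring. }
rewrite R.
apply Rle_trans with (AA eps n * (2 * FF eps c)).
- apply Rmult_le_compat_l; lra.
- lra.
Qed.
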